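(* Let $f(x_1,x_2)=(-2+x_1+x_2)^2$ and $g(x_1,x_2)=1-x_1^2-x_2^2$; the global minimum of $f$ on $\{x: g(x)\geqslant 0\}$ is $2(3-2\sqrt{2})$. For every integer $d\geqslant 1$, the optimal value of the order-$d$ DSOS relaxation $$\sup_{\lambda,\sigma_0,\sigma_1}\lambda\quad\text{s.t.}\quad f-\lambda=\sigma_0+\sigma_1 g,\ \sigma_0\in\mathrm{DSOS}_d,\ \sigma_1\in\mathrm{DSOS}_{d-1}$$ is at most $4(1-\sqrt{2})$; in particular its gap to the global minimum is at least $2$ at every order, and the DSOS hierarchy does not converge to the global minimum.
   Context: For $\alpha\in\mathbb{N}^2$ write $x^\alpha=x_1^{\alpha_1}x_2^{\alpha_2}$ and $|\alpha|=\alpha_1+\alpha_2$. $\mathrm{DSOS}_d$ denotes the set of finite nonnegative combinations of polynomials of the forms $(x^\alpha)^2$, $(x^\alpha+x^\beta)^2$, $(x^\alpha-x^\beta)^2$ with $|\alpha|,|\beta|\leqslant d$ (diagonally-dominant sums of squares). *)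

(* Defs.v *)
From mathcomp Require Import all_boot all_order all_algebra.
From mathcomp Require Import mpoly.
Set Implicit Arguments. Unset Strict Implicit. Unset Printing Implicit Defensive.
Import Order.TTheory GRing.Theory Num.Theory.
Local Open Scope ring_scope.

Section DSOS.
Variable R : rcfType.

Definition x1 : {mpoly R[2]} := 'X_(@Ordinal 2 0 isT).
Definition x2 : {mpoly R[2]} := 'X_(@Ordinal 2 1 isT).

Definition f_ex : {mpoly R[2]} := (-2%:R%:MP + x1 + x2) ^+ 2.
Definition g_ex : {mpoly R[2]} := 1 - x1 ^+ 2 - x2 ^+ 2.

Definition dsos_gen (d : nat) (p : {mpoly R[2]}) : Prop :=
  exists (a b : 'X_{1..2}), (mdeg a <= d)%N /\ (mdeg b <= d)%N /\
    (p = 'X_[a] ^+ 2 \/ p = ('X_[a] + 'X_[b]) ^+ 2 \/ p = ('X_[a] - 'X_[b]) ^+ 2).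

Definition DSOS (d : nat) (p : {mpoly R[2]}) : Prop :=
  exists s : seq (R * {mpoly R[2]}),
    (forall cq, cq \in s -> 0 <= cq.1 /\ dsos_gen d cq.2) /\
    p = \sum_(cq <- s) cq.1 *: cq.2.

Definition dsos_feasible (d : nat) (lam : R) : Prop :=
  exists sigma0 sigma1 : {mpoly R[2]},
    DSOS d sigma0 /\ DSOS d.-1 sigma1 /\
    f_ex - lam%:MP = sigma0 + sigma1 * g_ex.

Definition is_global_min (p q : {mpoly R[2]}) (m : R) : Prop :=
  (exists x : 'I_2 -> R, 0 <= q.@[x] /\ p.@[x] = m) /\
  (forall x : 'I_2 -> R, 0 <= q.@[x] -> m <= p.@[x]).
End DSOS.

(* Main.v *)
Require Import Defs.
From mathcomp Require Import all_boot all_order all_algebra.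
From mathcomp Require Import mpoly.
From mathcomp Require Import ring lra.
Import Order.TTheory GRing.Theory Num.Theory.
Local Open Scope ring_scope.

Section Aux.
Variable R : rcfType.

Definition pt (x y : R) : 'I_2 -> R := fun i => if val i == 0%N then x else y.

Definition cc : R := Num.sqrt 2 / 2.

Definition LL (p : {mpoly R[2]}) : R :=
  (p.@[pt cc cc] + p.@[pt (- cc) cc] + p.@[pt cc (- cc)] - p.@[pt (- cc) (- cc)]) / 2.

Lemma LL0 : LL 0 = 0.
Proof. rewrite /LL !meval0; ring. Qed.

Lemma LLD p q : LL (p + q) = LL p + LL q.
Proof. rewrite /LL !mevalD; ring. Qed.

Lemma LLZ a p : LL (a *: p) = a * LL p.
Proof. rewrite /LL !mevalZ; ring. Qed.

Lemma sqrt2_sq : Num.sqrt (2 : R) ^+ 2 = 2.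
Proof. by rewrite sqr_sqrtr // ler0n. Qed.

Lemma sqrt2_ge0 : 0 <= Num.sqrt (2 : R).
Proof. exact: sqrtr_ge0. Qed.

Lemma cc_sq : cc * cc = 1 / 2.
Proof.
have h := sqrt2_sq; rewrite expr2 in h; rewrite /cc.
transitivity (Num.sqrt (2:R) * Num.sqrt 2 / 4); first by field.
by rewrite h; field.
Qed.

Lemma evalX (x y : R) (m : 'X_{1..2}) :
  ('X_[m]).@[pt x y] = x ^+ (m ord0) * y ^+ (m (lift ord0 ord0)).
Proof. by rewrite mevalX !big_ord_recl big_ord0 mulr1. Qed.

Lemma sgn (k : nat) : (-1 : R) ^+ k = 1 \/ (-1 : R) ^+ k = -1.
Proof. rewrite -signr_odd; case: (odd k) => /=; [right|left]; rewrite ?expr1 ?expr0 //. Qed.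

Lemma key (ka y s1 s2 s3 s4 : R) :
  (s1 = 1 \/ s1 = -1) -> (s2 = 1 \/ s2 = -1) ->
  (s3 = 1 \/ s3 = -1) -> (s4 = 1 \/ s4 = -1) ->
  0 <= (ka + y) ^+ 2 + (s1 * ka + s3 * y) ^+ 2
       + (s2 * ka + s4 * y) ^+ 2 - (s1 * s2 * ka + s3 * s4 * y) ^+ 2.
Proof.
have h1 := sqr_ge0 (ka - y); have h2 := sqr_ge0 (ka + y).
move=> [->|->] [->|->] [->|->] [->|->]; lra.
Qed.

Lemma evalN (x y : R) (m : 'X_{1..2}) :
  [/\ ('X_[m]).@[pt (-x) y] = (-1) ^+ (m ord0) * ('X_[m]).@[pt x y],
      ('X_[m]).@[pt x (-y)] = (-1) ^+ (m (lift ord0 ord0)) * ('X_[m]).@[pt x y] &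
      ('X_[m]).@[pt (-x) (-y)] = (-1) ^+ (m ord0) * (-1) ^+ (m (lift ord0 ord0)) * ('X_[m]).@[pt x y]].
Proof. rewrite !evalX (exprNn x) (exprNn y); split; ring. Qed.

Lemma LL_gen d q : dsos_gen d q -> 0 <= LL q.
Proof.
move=> [a [b [_ [_ H]]]].
have [ha1 ha2 ha3] := evalN cc cc a.
have [hb1 hb2 hb3] := evalN cc cc b.
set A := ('X_[a]).@[pt cc cc] in ha1 ha2 ha3.
set B := ('X_[b]).@[pt cc cc] in hb1 hb2 hb3.
have gen : forall e : R,
   0 <= LL (('X_[a] + e *: 'X_[b]) ^+ 2).
  move=> e; rewrite /LL !expr2 !mevalM !mevalD !mevalZ ha1 ha2 ha3 hb1 hb2 hb3 -/A -/B.
  have h := @key A (e * B) _ _ _ _ (sgn (a ord0)) (sgn (a (lift ord0 ord0)))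
     (sgn (b ord0)) (sgn (b (lift ord0 ord0))).
  apply: le_trans (divr_ge0 h (ler0n _ 2)) _.
  rewrite le_eqVlt; apply/orP; left; apply/eqP; rewrite !expr2; ring.
case: H => [->|[->|->]].
- have := gen 0; by rewrite scale0r addr0.
- have := gen 1; by rewrite scale1r.
- have := gen (-1); by rewrite scaleN1r.
Qed.

Lemma LL_dsos d p : DSOS d p -> 0 <= LL p.
Proof.
move=> [s [Hs ->]]; elim: s Hs => [|cq s IH] Hs.
  by rewrite big_nil LL0.
rewrite big_cons LLD LLZ; apply: addr_ge0.
  have [h1 h2] := Hs cq (mem_head _ _).
  by apply: mulr_ge0 => //; apply: LL_gen h2.
by apply: IH => x hx; apply: Hs; rewrite in_cons hx orbT.
Qed.

Lemma g_vanish (s : {mpoly R[2]}) : LL (s * g_ex R) = 0.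
Proof.
have hc := cc_sq.
rewrite /LL !mevalM /g_ex /x1 /x2 !mevalB !meval1 !expr2 !mevalM !mevalXU /pt /=.
have -> : 1 - cc * cc - cc * cc = 0 by rewrite hc; field.
have -> : 1 - - cc * - cc - cc * cc = 0 by rewrite mulrNN hc; field.
have -> : 1 - cc * cc - - cc * - cc = 0 by rewrite mulrNN hc; field.
have -> : 1 - - cc * - cc - - cc * - cc = 0 by rewrite mulrNN hc; field.
rewrite !mulr0; ring.
Qed.

Lemma LL_f : LL (f_ex R) = 4 * (1 - Num.sqrt 2).
Proof.
rewrite /LL /f_ex /x1 /x2 !expr2 !mevalM !mevalD !mevalN !mevalC !mevalXU /pt /= /cc.
by field.
Qed.

Lemma LL_C (a : R) : LL a%:MP = a.
Proof. rewrite /LL !mevalC; by field. Qed.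

Lemma feasible_bound d (lam : R) : dsos_feasible d lam -> lam <= 4 * (1 - Num.sqrt 2).
Proof.
move=> [s0 [s1 [h0 [h1 he]]]].
have := congr1 LL he.
have -> : f_ex R - lam%:MP = f_ex R + (-1) *: lam%:MP by rewrite scaleN1r.
rewrite !LLD g_vanish addr0 LLZ LL_C LL_f => e.
have := @LL_dsos d s0 h0; rewrite -e; lra.
Qed.

End Aux.

Theorem mainTheorem5 (R : rcfType) :
  is_global_min (f_ex R) (g_ex R) (2 * (3 - 2 * Num.sqrt 2)) /\
  (forall (d : nat), (1 <= d)%N -> forall lam : R, dsos_feasible d lam ->
     lam <= 4 * (1 - Num.sqrt 2)) /\
  (forall (d : nat), (1 <= d)%N -> forall lam : R, dsos_feasible d lam ->
     2 <= 2 * (3 - 2 * Num.sqrt 2) - lam).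
Proof.
have r2 := sqrt2_sq R; have r0 := sqrt2_ge0 R.
split; last split.
- split.
  + exists (@pt R (@cc R) (@cc R)).
    rewrite /g_ex /f_ex /x1 /x2 !expr2 !mevalM !mevalB !mevalD !mevalN !mevalC
      ?meval1 ?mevalM !mevalXU /pt /= /cc.
    rewrite expr2 in r2; split; nra.
  + move=> x.
    rewrite /g_ex /f_ex /x1 /x2 !expr2 !mevalM !mevalB !mevalD !mevalN !mevalC
      ?meval1 ?mevalM !mevalXU.
    set u := x _; set v := x _ => hg.
    have hs : u + v <= Num.sqrt 2.
      rewrite expr2 in r2.
      case: (lerP (u + v) (Num.sqrt 2)) => // hlt.
      have h1 : 0 < (u + v - Num.sqrt 2) * (u + v + Num.sqrt 2).
        apply: mulr_gt0; lra.
      have h2 := sqr_ge0 (u - v); rewrite expr2 in h2; nra.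
    rewrite expr2 in r2.
    have hs2 : Num.sqrt 2 < 2 :> R.
      case: (lerP 2 (Num.sqrt (2:R))) => // h2; nra.
    have hp : 0 <= (Num.sqrt 2 - (u + v)) * (4 - u - v - Num.sqrt 2).
      apply: mulr_ge0; lra.
    nra.
- by move=> d _ lam; apply: feasible_bound.
- move=> d _ lam h; have := @feasible_bound R d lam h; lra.
Qed.
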